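(* Let $\pi=(O,h)$ be the complete prefix unfolding of a 1-safe net system. Let $e_1$ be a cut-off event of $\pi$ and $e_1'$ its corresponding event, and suppose $h(e_1\bullet)=h(e_1'\bullet)$. Then for every event $e_2$ of $\pi$, $e_1'\triangleright e_2$ implies $h(e_1)<_{tar}h(e_2)$.
   Context: Petri net system $S=(N,M_0)$, $N=(P,T,F)$, markings, enabling and firing $M'=M-\bullet t+t\bullet$ as usual; $S$ is 1-safe if every reachable marking has at most one token per place. Transition adjacency relation: $t_1<_{tar}t_2$ iff there is a reachable marking $M_s$ enabling $t_1$ such that after firing $t_1$ from $M_s$, $t_2$ is enabled. Occurrence net $O=(C,E,G)$, $x<y$ iff a directed path with at least one arc from $x$ to $y$; configurations (conflict-free, backward closed event sets), local configuration $[e]=\{x\mid x<e\text{ or }x=e\}$, $Cut(\mathcal C)=(Min(O)\cup\mathcal C\bullet)\setminus\bullet\mathcal C$, $Mark(\mathcal C)=h(Cut(\mathcal C))$. With an adequate order $\prec$ (strict well-founded partial order on configurations refining strict inclusion of local configurations), $e$ is a cut-off event if there is $e'$ with $Mark([e])=Mark([e'])$ and $[e']\prec[e]$, and $e'$ is then its corresponding event. The complete prefix unfolding is the greatest backward closed subnet of the unfolding containing no events after a cut-off event. For a set of nodes $Y$, $\bullet Y=\bigcup_{y\in Y}\bullet y$; $Max(E_0)=\{e\in E_0\mid\forall e'\in E_0: e\not<e'\}$. Max-Event Adjacency: for events $e<f$, $e\triangleright f$ iff $e\in Max(\bullet(\bullet f))$. *)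

(* Defs.v *)
From Stdlib Require List.
From Stdlib Require Import Relations.
From mathcomp Require Import all_boot.

Set Implicit Arguments.
Unset Strict Implicit.
Unset Printing Implicit Defensive.

Record net := Net {
  place : finType;
  trans : finType;
  pre   : trans -> place -> bool;
  post  : trans -> place -> bool
}.

Definition marking (N : net) := place N -> nat.

Definition enabled (N : net) (M : marking N) (t : trans N) : Prop :=
  forall p, pre t p -> 0 < M p.

Definition fire (N : net) (M : marking N) (t : trans N) : marking N :=
  fun p => M p - nat_of_bool (pre t p) + nat_of_bool (post t p).

Inductive reachable (N : net) (M0 : marking N) : marking N -> Prop :=
| reach_init : reachable M0 M0
| reach_step : forall M t, reachable M0 M -> enabled M t ->
                 reachable M0 (fire M t).

Definition one_safe (N : net) (M0 : marking N) : Prop :=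
  forall M, reachable M0 M -> forall p, M p <= 1.

Definition tar (N : net) (M0 : marking N) (t1 t2 : trans N) : Prop :=
  exists Ms, reachable M0 Ms /\ enabled Ms t1 /\ enabled (fire Ms t1) t2.

Record onet := ONet {
  cond  : Type;
  event : Type;
  cpre  : event -> cond -> Prop;
  cpost : event -> cond -> Prop
}.

Definition node (O : onet) := (cond O + event O)%type.

Definition arc (O : onet) (x y : node O) : Prop :=
  match x, y with
  | inl c, inr e => cpre e c
  | inr e, inl c => cpost e c
  | _, _ => False
  end.

Definition lt (O : onet) : node O -> node O -> Prop := clos_trans _ (@arc O).
Definition le (O : onet) (x y : node O) : Prop := lt x y \/ x = y.

Definition conflict (O : onet) (x y : node O) : Prop :=
  exists (e1 e2 : event O) (c : cond O),
    e1 <> e2 /\ cpre e1 c /\ cpre e2 c /\ le (inr e1) x /\ le (inr e2) y.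

Definition min_cond (O : onet) (c : cond O) : Prop := forall e, ~ cpost e c.

Definition occurrence_net (O : onet) : Prop :=
  (forall (c : cond O) e e', cpost e c -> cpost e' c -> e = e') /\
  (forall x : node O, ~ lt x x) /\
  (forall x : node O, exists l : list (node O), forall y, lt y x -> List.In y l) /\
  (forall x : node O, ~ conflict x x).

Definition coset (O : onet) (B : cond O -> Prop) : Prop :=
  forall x y, B x -> B y -> x <> y ->
    ~ lt (inl x) (inl y) /\ ~ conflict (inl x) (inl y).

Definition bij_on (X Y : Type) (A : X -> Prop) (f : X -> Y) (B : Y -> Prop) :=
  (forall x, A x -> B (f x)) /\
  (forall x y, A x -> A y -> f x = f y -> x = y) /\
  (forall y, B y -> exists x, A x /\ f x = y).

Definition branching_process (N : net) (M0 : marking N) (O : onet)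
    (hc : cond O -> place N) (he : event O -> trans N) : Prop :=
  occurrence_net O /\
  bij_on (@min_cond O) hc (fun p => 0 < M0 p) /\
  (forall e, bij_on (cpre e) hc (fun p => pre (he e) p)) /\
  (forall e, bij_on (cpost e) hc (fun p => post (he e) p)) /\
  (forall e e', he e = he e' -> (forall c, cpre e c <-> cpre e' c) -> e = e').

(* The unfolding: the branching process closed under all possible
   extensions (characterises the unfolding up to isomorphism). *)
Definition unfolding (N : net) (M0 : marking N) (O : onet)
    (hc : cond O -> place N) (he : event O -> trans N) : Prop :=
  branching_process M0 hc he /\
  (forall (t : trans N) (B : cond O -> Prop),
     coset B -> bij_on B hc (fun p => pre t p) ->
     exists e, he e = t /\ (forall c, cpre e c <-> B c)).

Definition is_config (O : onet) (Cf : event O -> Prop) : Prop :=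
  (forall e e', Cf e -> Cf e' -> ~ conflict (inr e) (inr e')) /\
  (forall e e', Cf e' -> lt (inr e) (inr e') -> Cf e).

Definition local_config (O : onet) (e : event O) : event O -> Prop :=
  fun x => lt (inr x) (inr e) \/ x = e.

Definition Cut (O : onet) (Cf : event O -> Prop) (c : cond O) : Prop :=
  (min_cond c \/ exists e, Cf e /\ cpost e c) /\ ~ (exists e, Cf e /\ cpre e c).

Definition Mark (N : net) (O : onet) (hc : cond O -> place N)
    (Cf : event O -> Prop) (p : place N) : Prop :=
  exists c, Cut Cf c /\ hc c = p.

Definition strict_incl (X : Type) (A B : X -> Prop) : Prop :=
  (forall x, A x -> B x) /\ exists x, B x /\ ~ A x.

Definition adequate_order (O : onet)
    (prec : (event O -> Prop) -> (event O -> Prop) -> Prop) : Prop :=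
  (forall A, is_config A -> ~ prec A A) /\
  (forall A B C, is_config A -> is_config B -> is_config C ->
     prec A B -> prec B C -> prec A C) /\
  well_founded (fun A B => is_config A /\ is_config B /\ prec A B) /\
  (forall e e', strict_incl (local_config e) (local_config e') ->
     prec (local_config e) (local_config e')).

Definition corresponding (N : net) (O : onet) (hc : cond O -> place N)
    (prec : (event O -> Prop) -> (event O -> Prop) -> Prop)
    (e e' : event O) : Prop :=
  (forall p, Mark hc (local_config e) p <-> Mark hc (local_config e') p) /\
  prec (local_config e') (local_config e).

Definition cutoff (N : net) (O : onet) (hc : cond O -> place N)
    (prec : (event O -> Prop) -> (event O -> Prop) -> Prop) (e : event O) : Prop :=
  exists e', corresponding hc prec e e'.

Definition in_prefix (N : net) (O : onet) (hc : cond O -> place N)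
    (prec : (event O -> Prop) -> (event O -> Prop) -> Prop) (e : event O) : Prop :=
  ~ exists e', cutoff hc prec e' /\ lt (inr e') (inr e).

Definition prepre (O : onet) (f e : event O) : Prop :=
  exists c, cpre f c /\ cpost e c.

Definition max_adj (O : onet) (e f : event O) : Prop :=
  lt (inr e) (inr f) /\ prepre f e /\
  (forall e', prepre f e' -> ~ lt (inr e) (inr e')).

Definition hpost (N : net) (O : onet) (hc : cond O -> place N)
    (e : event O) (p : place N) : Prop :=
  exists c, cpost e c /\ hc c = p.

(* Main.v *)
Require Import Defs.
From mathcomp Require Import all_boot zify.
From Stdlib Require Import Relations Classical FunctionalExtensionality Lia.

Inductive fires {N : net} (M : marking N) : list (trans N) -> marking N -> Prop :=
| fires_nil : fires M nil M
| fires_cons : forall t s M', enabled M t -> fires (fire M t) s M' -> fires M (t :: s) M'.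

Lemma fires_reach {N : net} (M0 M M' : marking N) s :
  reachable M0 M -> fires M s M' -> reachable M0 M'.
Proof.
  intros HR Hf; induction Hf; auto. apply IHHf. apply reach_step; auto.
Qed.

Lemma fires_app {N : net} (M M1 : marking N) s t :
  fires M s M1 -> enabled M1 t -> fires M (s ++ (t :: nil)) (fire M1 t).
Proof.
  intros Hf He; induction Hf; simpl.
  - apply fires_cons; auto. apply fires_nil.
  - apply fires_cons; auto.
Qed.

Ltac crush := repeat match goal with
  | H : is_true true -> _ |- _ => specialize (H is_true_true)
  | H : is_true false -> _ |- _ => clear H
  | H : is_true false |- _ => discriminate H
  end; try lia; exfalso; auto.

Lemma swap1 {N : net} (M0 L : marking N) t u :
  one_safe M0 -> reachable M0 L -> enabled L t -> enabled (fire L t) u ->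
  (forall p, pre u p -> post t p -> False) ->
  enabled L u /\ enabled (fire L u) t /\ fire (fire L u) t = fire (fire L t) u.
Proof.
  intros Hs HR Ht Hu Hd.
  have HRt : reachable M0 (fire L t) by apply reach_step.
  have Hu' : enabled L u.
  { intros p Hp. move: (Hs _ HR p) (Hs _ HRt p) (Hu p Hp) (Ht p) (Hd p Hp).
    rewrite /fire. case: (pre t p); case: (post t p) => /=; intros; crush. }
  have HRu : reachable M0 (fire L u) by apply reach_step.
  have Ht' : enabled (fire L u) t.
  { intros p Hp. move: (Hs _ HR p) (Hs _ HRt p) (Hs _ HRu p) (Ht p Hp) (Hu' p) (Hu p).
    rewrite /fire. move: Hp (Hd p).
    case: (pre t p); case: (post t p); case: (pre u p); case: (post u p) => /=; intros; crush. }
  split; [exact Hu'|split; [exact Ht'|]].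
  apply functional_extensionality => p.
  have HRut : reachable M0 (fire (fire L u) t) by apply reach_step.
  move: (Hs _ HR p) (Hs _ HRt p) (Hs _ HRu p) (Hs _ HRut p) (Ht p) (Hu p) (Hu' p) (Ht' p) (Hd p).
  rewrite /fire.
  case: (pre t p); case: (post t p); case: (pre u p); case: (post u p) => /=;
  intros; crush.
Qed.

Lemma swap_seq {N : net} (M0 : marking N) t :
  one_safe M0 -> forall s L M, reachable M0 L -> enabled L t -> fires (fire L t) s M ->
  (forall u, List.In u s -> forall p, pre u p -> post t p -> False) ->
  exists L', fires L s L' /\ enabled L' t /\ fire L' t = M.
Proof.
  intros Hs s; induction s as [|u s IH]; intros L M HR Ht Hf Hd.
  - inversion Hf; subst. exists L. split; [apply fires_nil|auto].
  - inversion Hf; subst.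
    destruct (swap1 _ _ _ _ Hs HR Ht H1 (Hd u (or_introl erefl))) as [Hu [Ht' Heq]].
    rewrite -Heq in H3.
    destruct (IH (fire L u) M) as [L' [HL1 [HL2 HL3]]]; auto.
    + apply reach_step; auto.
    + intros v Hv; apply Hd; right; auto.
    + exists L'. split; auto. apply fires_cons; auto.
Qed.

Lemma lt_pp {O : onet} (e f : event O) c : cpost e c -> cpre f c -> lt (inr e) (inr f).
Proof. intros H1 H2. apply t_trans with (inl c); apply t_step; [exact H1|exact H2]. Qed.

Lemma lt_trans' {O : onet} (x y z : node O) : lt x y -> lt y z -> lt x z.
Proof. intros; eapply t_trans; eauto. Qed.

Lemma le_trans' {O : onet} (x y z : node O) : le x y -> le y z -> le x z.
Proof.
  unfold le. intros [H1|H1] [H2|H2]; subst; auto. left; eapply lt_trans'; eauto.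
Qed.

Lemma cfg_of {O : onet} (Hocc : occurrence_net O) (D : event O -> Prop) e :
  (forall x, D x -> le (inr x) (inr e)) ->
  (forall x y, D y -> lt (inr x) (inr y) -> D x) -> is_config D.
Proof.
  intros Hle Hb. split; [|intros x y Hy Hxy; eauto].
  intros x y Dx Dy [e1 [e2 [c [Hne [H1 [H2 [H3 H4]]]]]]].
  destruct Hocc as [_ [_ [_ Hnc]]]. apply (Hnc (inr e)).
  exists e1, e2, c. repeat split; auto; eapply le_trans'; eauto.
Qed.

Definition good {N : net} (M0 : marking N) {O : onet} (hc : cond O -> place N)
  (D : event O -> Prop) (M : marking N) : Prop :=
  reachable M0 M /\ (forall p, 0 < M p <-> Mark hc D p) /\
  (forall c c', Cut D c -> Cut D c' -> hc c = hc c' -> c = c').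

Lemma good_ext {N : net} (M0 : marking N) {O : onet} (hc : cond O -> place N)
  (B D : event O -> Prop) M : (forall x, B x <-> D x) -> good M0 hc B M -> good M0 hc D M.
Proof.
  intros Heq [HR [HM HI]].
  have HC : forall c, Cut B c <-> Cut D c.
  { intros c; unfold Cut; split; intros [Hp Hn]; split.
    - destruct Hp as [Hm|[e [He1 He2]]]; [left; auto|right; exists e; split; [apply Heq|]; auto].
    - intros [f [Hf1 Hf2]]; apply Hn; exists f; split; auto; apply Heq; auto.
    - destruct Hp as [Hm|[e [He1 He2]]]; [left; auto|right; exists e; split; [apply Heq|]; auto].
    - intros [f [Hf1 Hf2]]; apply Hn; exists f; split; auto; apply Heq; auto. }
  split; [exact HR|split].
  - intros p; rewrite HM; unfold Mark; split; intros [c [Hc Hp]]; exists c; split; auto; apply HC; auto.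
  - intros c c' Hc Hc'; apply HI; apply HC; auto.
Qed.

Lemma good0 {N : net} (M0 : marking N) {O : onet} (hc : cond O -> place N) he :
  branching_process M0 hc he -> good M0 hc (fun _ => False) M0.
Proof.
  intros [_ [[Hmap [Hinj Hsur]] _]].
  have HC : forall c, Cut (fun _ : event O => False) c <-> min_cond c.
  { intros c; split. intros [[Hm|[e [[] _]]] _]; auto.
    intros Hm; split; [left; auto|intros [f [[] _]]]. }
  split; [apply reach_init|split].
  - intros p; split.
    + intros Hp. destruct (Hsur p Hp) as [c [Hc <-]]. exists c; split; auto; apply HC; auto.
    + intros [c [Hc <-]]. apply Hmap. apply HC; auto.
  - intros c c' Hc Hc'; apply Hinj; apply HC; auto.
Qed.

Lemma step {N : net} (M0 : marking N) {O : onet} (hc : cond O -> place N) he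
  (Hsafe : one_safe M0) (Hbp : branching_process M0 hc he)
  (D : event O -> Prop) g M :
  is_config D -> D g -> (forall x, D x -> ~ lt (inr g) (inr x)) ->
  good M0 hc (fun x => D x /\ x <> g) M ->
  enabled M (he g) /\ good M0 hc D (fire M (he g)).
Proof.
  intros [HDc HDb] Dg Hmax [HR [HM HI]].
  destruct Hbp as [[_ [Hirr _]] [_ [Hbpre [Hbpost _]]]].
  set D' := fun x => D x /\ x <> g.
  have Hi : forall c, cpre g c -> Cut D' c.
  { intros c Hc. split.
    - destruct (classic (min_cond c)) as [Hm|Hm]; [left; exact Hm| right].
      apply not_all_ex_not in Hm as [e He]. apply NNPP in He. exists e. split; [split|exact He].
      + apply (HDb e g Dg). eapply lt_pp; eauto.
      + intro Heq; subst. apply (Hirr (inr g)). eapply lt_pp; eauto.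
    - intros [f [[Df Hfg] Hf]]. apply (HDc f g Df Dg). exists f, g, c.
      repeat split; auto; right; reflexivity. }
  have Hii : forall c, Cut D c <-> (Cut D' c /\ ~ cpre g c) \/ cpost g c.
  { intro c; split.
    - intros [Hp Hn]. destruct (classic (cpost g c)) as [H|H]; [right; exact H| left]. split.
      + split.
        * destruct Hp as [Hm|[e [De He]]]; [left; exact Hm|right; exists e; split; [split; [exact De|]|exact He]].
          intro; subst; contradiction.
        * intros [f [[Df _] Hf]]. apply Hn; exists f; auto.
      + intro Hc. apply Hn; exists g; auto.
    - intros [[[Hp Hn] Hng] | Hpost].
      + split.
        * destruct Hp as [Hm|[e [[De _] He]]]; [left; exact Hm|right; exists e; auto].
        * intros [f [Df Hf]]. destruct (classic (f = g)) as [->|Hfg]; [auto| apply Hn; exists f; split; [split|]; auto].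
      + split.
        * right; exists g; auto.
        * intros [f [Df Hf]]. apply (Hmax f Df). eapply lt_pp; eauto. }
  have Hpf : forall c, Cut D' c -> ~ cpre g c -> pre (he g) (hc c) = false.
  { intros c Hc Hng. apply/negbTE/negP => Hp.
    destruct (proj2 (proj2 (Hbpre g)) _ Hp) as [c'' [Hc'' Heq]].
    have := HI c'' c (Hi c'' Hc'') Hc Heq. intros ->. contradiction. }
  have Hen : enabled M (he g).
  { intros p Hp. destruct (proj2 (proj2 (Hbpre g)) p Hp) as [c [Hc <-]].
    apply HM. exists c; split; auto. }
  have HRf : reachable M0 (fire M (he g)) by apply reach_step.
  have Hmix : forall c1 c2, Cut D' c1 -> ~ cpre g c1 -> cpost g c2 -> hc c1 = hc c2 -> False.
  { intros c1 c2 H1 H2 H3 Heq.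
    have Hm : 0 < M (hc c1) by apply HM; exists c1; auto.
    have Hpo : post (he g) (hc c1) by rewrite Heq; apply (proj1 (Hbpost g)).
    have := Hsafe _ HRf (hc c1). rewrite /fire (Hpf c1 H1 H2) Hpo /=. lia. }
  split; [exact Hen|split; [exact HRf|split]].
  - intros p. have Hs1 := Hsafe _ HR p. split.
    + intros Hpos. case Hpo: (post (he g) p).
      * destruct (proj2 (proj2 (Hbpost g)) p Hpo) as [c [Hc <-]].
        exists c; split; auto. apply Hii; right; auto.
      * case Hpr: (pre (he g) p); rewrite /fire Hpr Hpo /= in Hpos; [lia|].
        have : Mark hc D' p by apply HM; lia.
        intros [c [Hc <-]]. exists c; split; auto. apply Hii; left; split; auto.
        intros Hc'. have := proj1 (Hbpre g) c Hc'. rewrite Hpr. discriminate.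
    + intros [c [Hc <-]]. apply Hii in Hc as [[HcD' Hng]|Hpost].
      * have Hm: 0 < M (hc c) by apply HM; exists c; auto.
        rewrite /fire (Hpf c HcD' Hng) /=. lia.
      * have Hpo : post (he g) (hc c) := proj1 (Hbpost g) c Hpost.
        rewrite /fire Hpo /=. lia.
  - intros c c' Hc Hc' Heq. apply Hii in Hc, Hc'.
    destruct Hc as [[Hc1 Hc2]|Hc]; destruct Hc' as [[Hc1' Hc2']|Hc'].
    + apply HI; auto.
    + exfalso; eapply Hmix; eauto.
    + exfalso; eapply Hmix; eauto.
    + apply (proj1 (proj2 (Hbpost g))); auto.
Qed.

Lemma remove_ex {A : Type} (a : A) (l : list A) : List.In a l ->
  exists l', List.length l' < List.length l /\ forall y, List.In y l -> y <> a -> List.In y l'.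
Proof.
  induction l as [|x r IH]; intros Ha; [destruct Ha|].
  destruct (classic (x = a)) as [->|Hxa].
  - exists r. split; [simpl; lia|]. intros y [->|Hy] Hne; [congruence|auto].
  - destruct Ha as [->|Ha]; [congruence|].
    destruct (IH Ha) as [r' [Hl Hr]]. exists (x :: r'). split; [simpl; lia|].
    intros y [->|Hy] Hne; [left; auto|right; auto].
Qed.

Lemma max_ex {O : onet} (Hocc : occurrence_net O) : forall (l : list (node O)) (P : event O -> Prop),
  (forall x, P x -> List.In (inr x) l) -> (exists x, P x) ->
  exists g, P g /\ forall y, P y -> ~ lt (inr g) (inr y).
Proof.
  destruct Hocc as [_ [Hirr _]].
  induction l as [|a r IH]; intros P HP [x Px].
  - destruct (HP x Px).
  - destruct (classic (exists x, P x /\ inr x <> a)) as [Hne|Hall].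
    + destruct (IH (fun x => P x /\ inr x <> a)) as [g [[Pg Hga] Hg]].
      { intros y [Py Hya]. destruct (HP y Py); [congruence|auto]. }
      { exact Hne. }
      destruct (classic (exists a', a = inr a' /\ P a' /\ lt (inr g) (inr a'))) as [[a' [Ha [Pa' Hlt]]]|Hn].
      * exists a'. split; auto. intros y Py Hy.
        destruct (classic (inr y = a)) as [Hya|Hya].
        -- rewrite Ha in Hya. injection Hya as ->. apply (Hirr _ Hy).
        -- apply (Hg y (conj Py Hya)). eapply lt_trans'; eauto.
      * exists g. split; auto. intros y Py Hy.
        destruct (classic (inr y = a)) as [Hya|Hya].
        -- apply Hn. exists y. auto.
        -- apply (Hg y (conj Py Hya)). auto.
    + exists x. split; auto. intros y Py Hy.
      have Hx : inr x = a by apply NNPP; intro H; apply Hall; exists x; auto.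
      have Hy' : inr y = a by apply NNPP; intro H; apply Hall; exists y; auto.
      rewrite -Hy' in Hx. injection Hx as ->. apply (Hirr _ Hy).
Qed.

Lemma reach {N : net} (M0 : marking N) {O : onet} (hc : cond O -> place N) he
  (Hsafe : one_safe M0) (Hbp : branching_process M0 hc he) :
  forall n (l : list (node O)) (B D : event O -> Prop) M,
  List.length l <= n -> is_config B -> is_config D -> (forall x, B x -> D x) ->
  (forall x, D x -> ~ B x -> List.In (inr x) l) -> good M0 hc B M ->
  exists s M', fires M s M' /\ good M0 hc D M' /\
    (forall t, List.In t s -> exists g, D g /\ ~ B g /\ t = he g).
Proof.
  have Hocc := proj1 Hbp.
  induction n; intros l B D M Hl HB HD HBD Hfin Hg;
    (destruct (classic (exists x, D x /\ ~ B x)) as [[x0 [Dx0 Bx0]]|Hno];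
     [|exists nil, M; split; [apply fires_nil|split; [|intros t []]];
       eapply good_ext; [|exact Hg]; intros x; split; [apply HBD|];
       intros Dx; apply NNPP; intro Bx; apply Hno; exists x; auto]).
  - destruct l; [destruct (Hfin x0 Dx0 Bx0)|simpl in Hl; lia].
  - destruct (max_ex Hocc l (fun x => D x /\ ~ B x)) as [g [[Dg Bg] Hmax]].
    { intros x [Dx Bx]; auto. }
    { exists x0; auto. }
    have HmaxD : forall y, D y -> ~ lt (inr g) (inr y).
    { intros y Dy Hy. destruct (classic (B y)) as [By|By].
      - apply Bg. apply (proj2 HB g y By Hy).
      - apply (Hmax y (conj Dy By) Hy). }
    destruct (@remove_ex (node O) (inr g) l (Hfin g Dg Bg)) as [l' [Hl' Hrem]].
    have HD' : is_config (fun x => D x /\ x <> g).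
    { destruct HD as [HDc HDb]. split.
      - intros e e' [De _] [De' _]. apply HDc; auto.
      - intros e e' [De' Hne'] Hlt. split; [eapply HDb; eauto|].
        intros ->. apply (HmaxD e' De' Hlt). }
    destruct (IHn l' B (fun x => D x /\ x <> g) M) as [s [M' [Hf [Hg' Hlab]]]]; auto.
    + simpl in Hl. lia.
    + intros x Bx. split; auto. intros ->. contradiction.
    + intros x [Dx Hxg] Bx. apply Hrem; [auto|congruence].
    + destruct (step M0 hc he Hsafe Hbp D g M' HD Dg HmaxD Hg') as [Hen Hgood].
      exists (s ++ (he g :: nil)), (fire M' (he g)). split; [apply fires_app; auto|split; auto].
      intros t Ht. apply List.in_app_or in Ht as [Ht|[<-|[]]].
      * destruct (Hlab t Ht) as [g0 [[Dg0 _] [Bg0 ->]]]. exists g0; auto.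
      * exists g; auto.
Qed.

Lemma reach0 {N : net} (M0 : marking N) {O : onet} (hc : cond O -> place N) he
  (Hsafe : one_safe M0) (Hbp : branching_process M0 hc he) (l : list (node O)) (D : event O -> Prop) :
  is_config D -> (forall x, D x -> List.In (inr x) l) -> exists M, good M0 hc D M.
Proof.
  intros HD Hfin.
  destruct (reach M0 hc he Hsafe Hbp (List.length l) l (fun _ => False) D M0) as [s [M [_ [HM _]]]]; auto.
  - split; [intros e e' []|intros e e' []].
  - intros x [].
  - eapply good0; eauto.
  - exists M; auto.
Qed.

Lemma last_pre {O : onet} (g e2 : event O) : lt (inr g) (inr e2) ->
  exists c e', cpre e2 c /\ cpost e' c /\ le (inr g) (inr e').
Proof.
  intros H. apply clos_trans_tn1 in H. remember (inr e2) as z eqn:Hz.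
  destruct H as [y Harc|y z Hyz Hty]; subst; [destruct Harc|].
  destruct y as [c|e]; [|destruct Hyz].
  remember (inl c) as w eqn:Hw. destruct Hty as [y Ha|y z' Hyz' Htz]; subst.
  - exists c, g. repeat split; auto. right; reflexivity.
  - destruct y as [c0|e']; [destruct Hyz'|]. exists c, e'. repeat split; auto.
    left. apply clos_tn1_trans. auto.
Qed.

Theorem proposition6 (N : net) (M0 : marking N) (O : onet)
    (hc : cond O -> place N) (he : event O -> trans N)
    (prec : (event O -> Prop) -> (event O -> Prop) -> Prop) :
  one_safe M0 ->
  unfolding M0 hc he ->
  adequate_order prec ->
  forall e1 e1' : event O,
    in_prefix hc prec e1 ->
    corresponding hc prec e1 e1' ->
    (forall p, hpost hc e1 p <-> hpost hc e1' p) ->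
    forall e2 : event O,
      in_prefix hc prec e2 ->
      max_adj e1' e2 ->
      tar M0 (he e1) (he e2).
Proof.
  intros Hsafe [Hbp _] _ e1 e1' _ Hcorr Hhp e2 _ [Hlt12 [_ Hmaxe]].
  have Hocc := proj1 Hbp.
  have Hbp0 := Hbp. destruct Hbp0 as [[_ [Hirr [Hfin Hnc]]] [_ [Hbpre [Hbpost _]]]].
  set C := fun x => lt (inr x) (inr e2).
  have HC : is_config C.
  { apply (cfg_of Hocc C e2). intros x Hx; left; exact Hx.
    intros x y Hy Hxy. eapply lt_trans'; eauto. }
  destruct (Hfin (inr e2)) as [l2 Hl2].
  have HCmax : forall g, C g -> ~ lt (inr e1') (inr g).
  { intros g Cg Hg. destruct (last_pre g e2 Cg) as [c [e' [Hc [He' Hle]]]].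
    apply (Hmaxe e'). exists c; auto.
    destruct Hle as [Hle| Hle]; [eapply lt_trans'; eauto|rewrite -Hle; auto]. }
  set D1 := fun x => local_config e1 x /\ x <> e1.
  have HD1 : is_config D1.
  { apply (cfg_of Hocc D1 e1). intros x [[Hx|Hx] Hne]; [left; auto|contradiction].
    intros x y [[Hy|Hy] Hne] Hxy; split.
    - left; eapply lt_trans'; eauto.
    - intros ->. apply (Hirr (inr e1)). eapply lt_trans'; eauto.
    - contradiction.
    - contradiction. }
  destruct (Hfin (inr e1)) as [l1 Hl1].
  destruct (reach0 M0 hc he Hsafe Hbp l1 D1 HD1) as [L HL].
  { intros x [[Hx|Hx] Hne]; [auto|contradiction]. }
  have Hlc : forall e : event O, is_config (local_config e).
  { intros e. apply (cfg_of Hocc (local_config e) e).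
    - intros x [Hx| ->]; [left; auto|right; reflexivity].
    - intros x y [Hy| ->] Hxy; left; [eapply lt_trans'; eauto|auto]. }
  destruct (step M0 hc he Hsafe Hbp (local_config e1) e1 L (Hlc e1) (or_intror erefl))
    as [HenL HK]; [| exact HL|].
  { intros x [Hx| ->] Hlt. - apply (Hirr (inr e1)); eapply lt_trans'; eauto.
    - apply (Hirr _ Hlt). }
  set K := fire L (he e1) in HK.
  have He1'C : forall x, local_config e1' x -> C x.
  { intros x [Hx| ->]; [eapply lt_trans'; eauto|auto]. }
  destruct (reach0 M0 hc he Hsafe Hbp l2 (local_config e1') (Hlc e1')) as [K' HK'].
  { intros x Hx; apply Hl2, He1'C, Hx. }
  have HK1 : good M0 hc (local_config e1') K.
  { destruct HK as [HR [HM _]]. split; [exact HR|split].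
    - intros p. rewrite HM. apply (proj1 Hcorr).
    - exact (proj2 (proj2 HK')). }
  destruct (reach M0 hc he Hsafe Hbp (List.length l2) l2 (local_config e1') C K)
    as [s [H [Hf [HH Hlab]]]]; auto.
  all: try (intros x Hx _; apply Hl2, Hx).
  have Hdis : forall u, List.In u s -> forall p, pre u p -> post (he e1) p -> False.
  { intros u Hu p Hp1 Hp2. destruct (Hlab u Hu) as [g [Cg [Ng ->]]].
    destruct (proj2 (proj2 (Hbpre g)) p Hp1) as [c [Hc Hcp]].
    destruct (proj2 (proj2 (Hbpost e1)) p Hp2) as [c1 [Hc1 Hc1p]].
    destruct (proj1 (Hhp p) (ex_intro _ c1 (conj Hc1 Hc1p))) as [c' [Hc' Hc'p]].
    set E := fun x => lt (inr x) (inr g) \/ local_config e1' x.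
    have HEC : forall x, E x -> C x.
    { intros x [Hx|Hx]; [eapply lt_trans'; eauto|auto]. }
    have HE : is_config E.
    { apply (cfg_of Hocc E e2). intros x Hx; left; apply HEC, Hx.
      intros x y [Hy|[Hy| ->]] Hxy.
      - left; eapply lt_trans'; eauto.
      - right; left; eapply lt_trans'; eauto.
      - right; left; auto. }
    destruct (reach0 M0 hc he Hsafe Hbp l2 E HE) as [ME [_ [_ HI]]].
    { intros x Hx; apply Hl2, HEC, Hx. }
    have HcE : Cut E c.
    { split.
      - destruct (classic (min_cond c)) as [Hm|Hm]; [left; exact Hm| right].
        apply not_all_ex_not in Hm as [e He]. apply NNPP in He. exists e. split; [|exact He].
        left; eapply lt_pp; eauto.
      - intros [f [Ef Hf']]. have Hfg : f <> g.
        { intros ->. destruct Ef as [Ef|Ef]; [apply (Hirr _ Ef)|contradiction]. }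
        apply (proj1 HC f g (HEC f Ef) Cg). exists f, g, c. repeat split; auto; right; reflexivity. }
    have Hc'E : Cut E c'.
    { split.
      - right. exists e1'. split; auto. right; right; reflexivity.
      - intros [f [Ef Hf']]. apply (HCmax f (HEC f Ef)). eapply lt_pp; eauto. }
    have Heq := HI c c' HcE Hc'E (etrans Hcp (esym Hc'p)). subst c'.
    apply (HCmax g Cg). eapply lt_pp; eauto. }
  destruct (swap_seq M0 (he e1) Hsafe s L H (proj1 HL) HenL Hf Hdis) as [L' [HfL [HenL' Heq]]].
  exists L'. split; [eapply fires_reach; [exact (proj1 HL)|exact HfL]|split; [exact HenL'|]].
  rewrite Heq. intros p Hp.
  destruct (proj2 (proj2 (Hbpre e2)) p Hp) as [c [Hc <-]].
  apply (proj1 (proj2 HH)). exists c. split; auto. split.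
  - destruct (classic (min_cond c)) as [Hm|Hm]; [left; exact Hm| right].
    apply not_all_ex_not in Hm as [e He]. apply NNPP in He. exists e. split; [|exact He].
    eapply lt_pp; eauto.
  - intros [f [Cf Hf']]. apply (Hnc (inr e2)). exists f, e2, c.
    repeat split; auto.
    + intros ->. apply (Hirr _ Cf).
    + left; exact Cf.
    + right; reflexivity.
Qed.
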